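(* Let $N_1,N_2,N_3,K$ be dyadic with $N_1\sim N_2\gg N_3$ and $K\ll N_1$, let $\phi_1,\phi_2,\phi_3\in L^2(\mathbb{T})$ satisfy $\mathrm{supp}\,\hat\phi_j\subset\mathcal{I}_{N_j}$, and let $0<\delta\lesssim N_1^{-1}$. Then \[ \big\|HP_{\le K}\big(e^{it\partial_x^2}\phi_1\,\overline{e^{it\partial_x^2}\phi_2}\big)\,e^{it\partial_x^2}\phi_3\big\|_{L^2([0,\delta];L^2(\mathbb{T}))}\lesssim\Big(\frac{K}{N_1}\Big)^{1/2}\|\phi_1\|_{L^2}\|\phi_2\|_{L^2}\|\phi_3\|_{L^2}. \] The same estimate holds if $e^{it\partial_x^2}\phi_3$ is replaced by $\overline{e^{it\partial_x^2}\phi_3}$, and also if $H$ is replaced by any Fourier multiplier with bounded symbol.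
   Context: $\mathbb{T}=\mathbb{R}/2\pi\mathbb{Z}$; $\hat\phi(n)$ are Fourier coefficients. $H$ is the Hilbert transformation (Fourier multiplier $-i\,\mathrm{sgn}(\xi)$). Fix $\eta\in C_0^\infty(\mathbb{R})$ even, monotone on $[0,\infty)$, with $\chi_{[-4/3,4/3]}\le\eta\le\chi_{[-5/3,5/3]}$; $P_{\le K}$ is the Fourier multiplier with symbol $\eta(\xi/K)$. Dyadic numbers range over $\{1,2,4,\dots\}$; $\mathcal{I}_1=[-2,2]$, $\mathcal{I}_N=[-2N,2N]\setminus(-N/2,N/2)$ for $N\ge2$. $A\sim B$ means $C^{-1}B\le A\le CB$ and $A\gg B$ means $A\ge C_0B$ for suitable absolute constants; $\lesssim$ hides constants depending only on these. *)

(* Defs.v *)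
From Stdlib Require Import Reals ZArith Lra.
From Coquelicot Require Import Coquelicot.
Open Scope R_scope.

Definition dy (k : nat) : R := 2 ^ k.

(* n in I_{2^k}:  I_1 = [-2,2],  I_N = [-2N,2N] \ (-N/2,N/2) for N >= 2 *)
Definition in_I (k : nat) (n : Z) : Prop :=
  if Nat.eqb k 0 then Rabs (IZR n) <= 2
  else dy k / 2 <= Rabs (IZR n) <= 2 * dy k.

(* supp \hat phi ⊂ I_{2^k}, phi given by its Fourier coefficients a *)
Definition supp_in (k : nat) (a : Z -> C) : Prop :=
  forall n : Z, ~ in_I k n -> a n = RtoC 0.

Definition chi (r x : R) : R := if Rle_dec (Rabs x) r then 1 else 0.

Definition eta_ok (eta : R -> R) : Prop :=
  (forall (k : nat) (x : R), ex_derive_n eta k x) /\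
  (forall x, eta (- x) = eta x) /\
  (forall x y, 0 <= x -> x <= y -> eta y <= eta x) /\
  (forall x, chi (4/3) x <= eta x /\ eta x <= chi (5/3) x).

Fixpoint csum (f : nat -> C) (n : nat) : C :=
  match n with
  | O => f O
  | S p => Cplus (csum f p) (f (S p))
  end.
Definition zsum (M : nat) (f : Z -> C) : C :=
  csum (fun j => f (Z.of_nat j - Z.of_nat M)%Z) (2 * M)%nat.

Definition cexpi (x : R) : C := (cos x, sin x).

Definition bnd (k : nat) : nat := (2 * Nat.pow 2 k)%nat.

(* (e^{it d_x^2} phi)(x) = sum_n a_n e^{i(n x - n^2 t)}, phi with supp \hat phi ⊂ I_{2^k} *)
Definition free_evol (k : nat) (a : Z -> C) (t x : R) : C :=
  zsum (bnd k) (fun n => Cmult (a n) (cexpi (IZR n * x - IZR n ^ 2 * t))).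

Definition phi_fun (k : nat) (a : Z -> C) : R -> C := free_evol k a 0.

Definition fcoef (f : R -> C) (n : Z) : C :=
  Cmult (RtoC (/ (2 * PI)))
        (@RInt C_R_CompleteNormedModule (fun x => Cmult (f x) (cexpi (- (IZR n * x)))) 0 (2 * PI)).

(* Fourier multiplier with symbol m composed with P_{<= K}, K = 2^kK.
   Since eta(n/K) = 0 for |n| > 5K/3, summing over |n| <= 2K is exact. *)
Definition mult_op (eta : R -> R) (m : Z -> C) (kK : nat) (f : R -> C) (x : R) : C :=
  zsum (bnd kK) (fun n =>
    Cmult (Cmult (m n) (RtoC (eta (IZR n / dy kK))))
          (Cmult (fcoef f n) (cexpi (IZR n * x)))).

Definition hsym (n : Z) : C := (0, - IZR (Z.sgn n)).

Definition l2T (f : R -> C) : R :=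
  sqrt (RInt (fun x => Cmod (f x) ^ 2) 0 (2 * PI)).

Definition l2tx (F : R -> R -> C) (delta : R) : R :=
  sqrt (RInt (fun t => RInt (fun x => Cmod (F t x) ^ 2) 0 (2 * PI)) 0 delta).

Definition output (eta : R -> R) (m : Z -> C) (kK k1 k2 k3 : nat) (cj : bool)
    (a1 a2 a3 : Z -> C) : R -> R -> C :=
  fun t x =>
    Cmult (mult_op eta m kK
             (fun y => Cmult (free_evol k1 a1 t y) (Cconj (free_evol k2 a2 t y))) x)
          (if cj then Cconj (free_evol k3 a3 t x) else free_evol k3 a3 t x).

(* the estimate with constants: A for ~ and delta <~ N1^{-1}, C0 for >>, C for <~ ;
   Mset the admissible multiplier symbols *)
Definition estimate_holds (eta : R -> R) (A C0 Cst : R) (Mset : (Z -> C) -> Prop) : Prop :=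
  forall (k1 k2 k3 kK : nat) (a1 a2 a3 : Z -> C) (delta : R) (cj : bool) (m : Z -> C),
    Mset m ->
    dy k1 <= A * dy k2 -> dy k2 <= A * dy k1 ->
    C0 * dy k3 <= dy k1 -> C0 * dy kK <= dy k1 ->
    supp_in k1 a1 -> supp_in k2 a2 -> supp_in k3 a3 ->
    0 < delta -> delta <= A / dy k1 ->
    l2tx (output eta m kK k1 k2 k3 cj a1 a2 a3) delta
      <= Cst * sqrt (dy kK / dy k1)
           * l2T (phi_fun k1 a1) * l2T (phi_fun k2 a2) * l2T (phi_fun k3 a3).

(* Main.v *)
Require Import Defs.
From Stdlib Require Import Reals ZArith Lra Lia List Psatz.
From Coquelicot Require Import Coquelicot.
Import ListNotations.
Open Scope R_scope.

Definition rs {A} (l : list A) (f : A -> R) : R := fold_right (fun a s => f a + s) 0 l.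
Definition cs {A} (l : list A) (f : A -> C) : C := fold_right (fun a s => Cplus (f a) s) (RtoC 0) l.

Lemma rs_nil {A} (f : A -> R) : rs nil f = 0. Proof. reflexivity. Qed.
Lemma rs_cons {A} a l (f : A -> R) : rs (a :: l) f = f a + rs l f. Proof. reflexivity. Qed.
Lemma cs_cons {A} a l (f : A -> C) : cs (a :: l) f = Cplus (f a) (cs l f). Proof. reflexivity. Qed.

Lemma rs_ext {A} (l : list A) f g : (forall a, In a l -> f a = g a) -> rs l f = rs l g.
Proof. induction l; simpl; intros H; auto. rewrite H, IHl; auto. Qed.
Lemma cs_ext {A} (l : list A) f g : (forall a, In a l -> f a = g a) -> cs l f = cs l g.
Proof. induction l; simpl; intros H; auto. rewrite H, IHl; auto. Qed.
Lemma rs_le {A} (l : list A) f g : (forall a, In a l -> f a <= g a) -> rs l f <= rs l g.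
Proof. induction l; simpl; intros H. lra. pose proof (H a (or_introl eq_refl)). pose proof (IHl (fun x h => H x (or_intror h))). lra. Qed.
Lemma rs_nonneg {A} (l : list A) f : (forall a, In a l -> 0 <= f a) -> 0 <= rs l f.
Proof. intros H. replace 0 with (rs l (fun _ => 0)). apply rs_le; auto. induction l; simpl; auto. rewrite IHl; auto. lra. intros; apply H; simpl; auto. Qed.
Lemma rs_zero {A} (l : list A) : rs l (fun _ => 0) = 0.
Proof. induction l; simpl; auto. rewrite IHl; lra. Qed.
Lemma rs_plus {A} (l : list A) f g : rs l (fun a => f a + g a) = rs l f + rs l g.
Proof. induction l; simpl; auto. lra. rewrite IHl; lra. Qed.
Lemma rs_scal {A} (l : list A) c f : rs l (fun a => c * f a) = c * rs l f.
Proof. induction l; simpl. lra. rewrite IHl; lra. Qed.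
Lemma rs_scal_r {A} (l : list A) c f : rs l (fun a => f a * c) = rs l f * c.
Proof. induction l; simpl. lra. rewrite IHl; lra. Qed.
Lemma rs_app {A} (l1 l2 : list A) f : rs (l1 ++ l2) f = rs l1 f + rs l2 f.
Proof. induction l1; simpl. lra. rewrite IHl1; lra. Qed.
Lemma rs_map {A B} (h : A -> B) l f : rs (map h l) f = rs l (fun a => f (h a)).
Proof. induction l; simpl; auto. rewrite IHl; auto. Qed.
Lemma rs_swap {A B} (l1 : list A) (l2 : list B) f :
  rs l1 (fun a => rs l2 (fun b => f a b)) = rs l2 (fun b => rs l1 (fun a => f a b)).
Proof. induction l1; simpl. symmetry; apply rs_zero. rewrite IHl1, <- rs_plus; auto. Qed.
Lemma rs_prod {A B} (l1 : list A) (l2 : list B) f :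
  rs (list_prod l1 l2) f = rs l1 (fun a => rs l2 (fun b => f (a, b))).
Proof. induction l1; simpl; auto. rewrite rs_app, rs_map, IHl1; auto. Qed.
Lemma rs_abs {A} (l : list A) f : Rabs (rs l f) <= rs l (fun a => Rabs (f a)).
Proof. induction l; simpl. rewrite Rabs_R0; lra. eapply Rle_trans. apply Rabs_triang. lra. Qed.

Lemma cs_zero {A} (l : list A) : cs l (fun _ => RtoC 0) = RtoC 0.
Proof. induction l; simpl; auto. rewrite IHl. apply injective_projections; simpl; lra. Qed.
Lemma cs_plus {A} (l : list A) f g : cs l (fun a => Cplus (f a) (g a)) = Cplus (cs l f) (cs l g).
Proof. induction l; simpl. apply injective_projections; simpl; lra. rewrite IHl. ring. Qed.
Lemma cs_mult_l {A} (l : list A) c f : cs l (fun a => Cmult c (f a)) = Cmult c (cs l f).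
Proof. induction l; simpl. apply injective_projections; simpl; lra. rewrite IHl. ring. Qed.
Lemma cs_mult_r {A} (l : list A) c f : cs l (fun a => Cmult (f a) c) = Cmult (cs l f) c.
Proof. induction l; simpl. apply injective_projections; simpl; lra. rewrite IHl. ring. Qed.
Lemma cs_app {A} (l1 l2 : list A) f : cs (l1 ++ l2) f = Cplus (cs l1 f) (cs l2 f).
Proof. induction l1; simpl. apply injective_projections; simpl; lra. rewrite IHl1; ring. Qed.
Lemma cs_map {A B} (h : A -> B) l f : cs (map h l) f = cs l (fun a => f (h a)).
Proof. induction l; simpl; auto. rewrite IHl; auto. Qed.
Lemma cs_swap {A B} (l1 : list A) (l2 : list B) f :
  cs l1 (fun a => cs l2 (fun b => f a b)) = cs l2 (fun b => cs l1 (fun a => f a b)).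
Proof. induction l1; simpl. symmetry; apply cs_zero. rewrite IHl1, <- cs_plus; auto. Qed.
Lemma cs_prod {A B} (l1 : list A) (l2 : list B) f :
  cs (list_prod l1 l2) f = cs l1 (fun a => cs l2 (fun b => f (a, b))).
Proof. induction l1; simpl; auto. rewrite cs_app, cs_map, IHl1; auto. Qed.
Lemma cs_mult {A B} (l1 : list A) (l2 : list B) f g :
  Cmult (cs l1 f) (cs l2 g) = cs l1 (fun a => cs l2 (fun b => Cmult (f a) (g b))).
Proof. rewrite <- cs_mult_r. apply cs_ext; intros. rewrite <- cs_mult_l. auto. Qed.
Lemma cs_conj {A} (l : list A) f : Cconj (cs l f) = cs l (fun a => Cconj (f a)).
Proof. induction l; simpl. apply injective_projections; simpl; lra. rewrite <- IHl.
 apply injective_projections; simpl; lra. Qed.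
Lemma fst_cs {A} (l : list A) f : fst (cs l f) = rs l (fun a => fst (f a)).
Proof. induction l; simpl; auto. rewrite IHl; auto. Qed.
Lemma Cmod_cs {A} (l : list A) f : Cmod (cs l f) <= rs l (fun a => Cmod (f a)).
Proof. induction l; simpl. rewrite Cmod_0; lra. eapply Rle_trans. apply Cmod_triangle. lra. Qed.

Lemma Cmod2_cs {A} (l : list A) f :
  Cmod (cs l f) ^ 2 = rs l (fun j => rs l (fun k => fst (Cmult (f j) (Cconj (f k))))).
Proof.
  assert (H := Cmod2_conj (cs l f)).
  assert (E: Cmod (cs l f) ^ 2 = fst (RtoC (Cmod (cs l f) ^ 2))) by reflexivity.
  rewrite E, H, cs_conj, cs_mult, fst_cs. apply rs_ext; intros. apply fst_cs.
Qed.

(* Cauchy-Schwarz via Lagrange *)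
Lemma rs_CS {A} (l : list A) a b :
  (rs l (fun i => a i * b i)) ^ 2 <= rs l (fun i => a i ^ 2) * rs l (fun i => b i ^ 2).
Proof.
  assert (H : 0 <= rs l (fun i => rs l (fun j => (a i * b j - a j * b i) ^ 2))).
  { apply rs_nonneg; intros; apply rs_nonneg; intros; apply pow2_ge_0. }
  assert (E : rs l (fun i => rs l (fun j => (a i * b j - a j * b i) ^ 2)) =
     2 * (rs l (fun i => a i ^ 2) * rs l (fun i => b i ^ 2)) - 2 * (rs l (fun i => a i * b i)) ^ 2).
  { rewrite (rs_ext l _ (fun i => rs l (fun j => a i ^ 2 * b j ^ 2) + rs l (fun j => a j ^ 2 * b i ^ 2)
        + (-2) * rs l (fun j => (a i * b i) * (a j * b j)))).
    2: { intros. rewrite <- rs_scal, <- !rs_plus. apply rs_ext; intros. ring. }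
    rewrite !rs_plus, rs_scal.
    rewrite (rs_swap l l (fun i j => a j ^ 2 * b i ^ 2)).
    assert (E1: forall (c : A -> R) (d : A -> R), rs l (fun i => rs l (fun j => c i * d j)) = rs l c * rs l d).
    { intros. rewrite <- rs_scal_r. apply rs_ext; intros. apply rs_scal. }
    rewrite (E1 (fun i => a i ^ 2) (fun j => b j ^ 2)).
    rewrite (E1 (fun i => a i * b i) (fun j => a j * b j)). ring. }
  lra.
Qed.

Lemma cs_CS {A} (l : list A) u v :
  Cmod (cs l (fun i => Cmult (u i) (v i))) ^ 2 <=
  rs l (fun i => Cmod (u i) ^ 2) * rs l (fun i => Cmod (v i) ^ 2).
Proof.
  eapply Rle_trans; [| apply rs_CS].
  assert (H0 : 0 <= Cmod (cs l (fun i => Cmult (u i) (v i)))) by apply Cmod_ge_0.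
  assert (H : Cmod (cs l (fun i => Cmult (u i) (v i))) <= rs l (fun i => Cmod (u i) * Cmod (v i))).
  { eapply Rle_trans; [apply Cmod_cs| right; apply rs_ext; intros; apply Cmod_mult]. }
  assert (0 <= rs l (fun i => Cmod (u i) * Cmod (v i))) by lra.
  nra.
Qed.

Definition zr (M : nat) : list Z :=
  map (fun j => (Z.of_nat j - Z.of_nat M)%Z) (seq 0 (2 * M + 1)).

Lemma csum_cs f n : csum f n = cs (seq 0 (S n)) f.
Proof.
  induction n. simpl. apply injective_projections; simpl; lra.
  rewrite seq_S, cs_app. simpl csum. rewrite IHn. simpl. 
  apply injective_projections; simpl; lra.
Qed.

Lemma zsum_cs M f : zsum M f = cs (zr M) f.
Proof. unfold zsum, zr. rewrite csum_cs, cs_map. f_equal. f_equal. lia. Qed.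

Lemma In_zr M n : In n (zr M) <-> (- Z.of_nat M <= n <= Z.of_nat M)%Z.
Proof.
  unfold zr. rewrite in_map_iff. split.
  - intros [j [<- Hj]]. apply in_seq in Hj. lia.
  - intros H. exists (Z.to_nat (n + Z.of_nat M)). split. lia. apply in_seq. lia.
Qed.

Lemma NoDup_zr M : NoDup (zr M).
Proof. unfold zr. apply NoDup_map_NoDup_ForallPairs. intros x y _ _ H. lia. apply seq_NoDup. Qed.

Lemma IZR_bnd k : IZR (Z.of_nat (bnd k)) = 2 * dy k.
Proof. rewrite <- INR_IZR_INZ. unfold bnd, dy. rewrite mult_INR, pow_INR. assert (H2 : INR 2 = 2) by (simpl; lra). rewrite H2. reflexivity. Qed.

Lemma dy_pos k : 1 <= dy k.
Proof. unfold dy. induction k; simpl; lra. Qed.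

Lemma in_I_zr k n : in_I k n -> In n (zr (bnd k)).
Proof.
  intros H. apply In_zr. unfold in_I in H.
  assert (Rabs (IZR n) <= 2 * dy k).
  { destruct (Nat.eqb k 0) eqn:E. apply Nat.eqb_eq in E. subst. unfold dy; simpl. lra. lra. }
  rewrite <- IZR_bnd in H0. assert (H1: - IZR (Z.of_nat (bnd k)) <= IZR n <= IZR (Z.of_nat (bnd k))) by (revert H0; unfold Rabs; destruct (Rcase_abs (IZR n)); intros; lra). clear H0. destruct H1 as [H0 H1].
  rewrite <- opp_IZR in H0. apply le_IZR in H0. apply le_IZR in H1. lia.
Qed.

Lemma supp_out k a n : supp_in k a -> ~ In n (zr (bnd k)) -> a n = RtoC 0.
Proof. intros H Hn. apply H. intros Hi. apply Hn, in_I_zr; auto. Qed.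

Lemma cs_collapse (l : list Z) (y : Z) (g : Z -> C) :
  NoDup l -> (~ In y l -> g y = RtoC 0) ->
  cs l (fun x => if Z.eq_dec x y then g x else RtoC 0) = g y.
Proof.
  induction l; intros Hn Hg; simpl.
  - symmetry; apply Hg; auto.
  - inversion Hn; subst. destruct (Z.eq_dec a y).
    + subst. rewrite (cs_ext l _ (fun _ => RtoC 0)). rewrite cs_zero.
      apply injective_projections; simpl; lra.
      intros x Hx. destruct (Z.eq_dec x y); auto. subst; contradiction.
    + rewrite IHl; auto. apply injective_projections; simpl; lra.
      intros Hy. apply Hg. intros [H|H]; auto.
Qed.

Lemma rs_indic_le {A} (l : list A) (P : A -> Prop) (dec : forall a, {P a} + {~ P a}) c :
  NoDup l -> 0 <= c -> (forall x y, In x l -> In y l -> P x -> P y -> x = y) ->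
  rs l (fun x => if dec x then c else 0) <= c.
Proof.
  induction l; intros Hn Hc Hu; simpl. lra.
  inversion Hn; subst. destruct (dec a).
  - rewrite (rs_ext l _ (fun _ => 0)). rewrite rs_zero. lra.
    intros x Hx. destruct (dec x); auto. assert (x = a) by (apply Hu; simpl; auto). subst; contradiction.
  - assert (rs l (fun x => if dec x then c else 0) <= c). apply IHl; auto.
    intros; apply Hu; simpl; auto. lra.
Qed.

Lemma cexpi_mult a b : Cmult (cexpi a) (cexpi b) = cexpi (a + b).
Proof. unfold cexpi. apply injective_projections; simpl; rewrite ?cos_plus, ?sin_plus; ring. Qed.
Lemma cexpi_conj a : Cconj (cexpi a) = cexpi (- a).
Proof. unfold cexpi, Cconj. simpl. rewrite cos_neg, sin_neg. reflexivity. Qed.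
Lemma Cmod_cexpi a : Cmod (cexpi a) = 1.
Proof. unfold cexpi, Cmod. simpl. pose proof (sin2_cos2 a). unfold Rsqr in H. replace (cos a * (cos a * 1) + sin a * (sin a * 1)) with (sin a * sin a + cos a * cos a) by ring. rewrite H. apply sqrt_1. Qed.

Lemma period_Z (m : Z) c : sin (IZR m * (2 * PI) + c) = sin c /\ cos (IZR m * (2 * PI) + c) = cos c.
Proof.
  destruct (Z_le_gt_dec 0 m).
  - rewrite <- (Z2Nat.id m) by lia. rewrite <- INR_IZR_INZ.
    replace (INR (Z.to_nat m) * (2 * PI) + c) with (c + 2 * INR (Z.to_nat m) * PI) by ring.
    rewrite sin_period, cos_period. auto.
  - assert (m = - Z.of_nat (Z.to_nat (- m)))%Z by lia. rewrite H, opp_IZR, <- INR_IZR_INZ.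
    set (k := Z.to_nat (-m)).
    pose proof (sin_period (- INR k * (2 * PI) + c) k). pose proof (cos_period (- INR k * (2 * PI) + c) k).
    replace (- INR k * (2 * PI) + c + 2 * INR k * PI) with c in * by ring. auto.
Qed.

Lemma base_int (z : C) (m : Z) (c : R) :
  is_RInt (fun x => fst (Cmult z (cexpi (IZR m * x + c)))) 0 (2 * PI)
    (if Z.eq_dec m 0 then 2 * PI * fst (Cmult z (cexpi c)) else 0).
Proof.
  destruct (Z.eq_dec m 0).
  - subst. eapply is_RInt_ext with (f := fun _ => fst (Cmult z (cexpi c))).
    intros. f_equal. f_equal. f_equal. simpl; ring.
    replace (2 * PI * fst (Cmult z (cexpi c))) with (scal (2 * PI - 0) (fst (Cmult z (cexpi c)))).
    apply (is_RInt_const (V := R_NormedModule)). unfold scal; simpl; unfold mult; simpl. ring.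
  - assert (Hm : IZR m <> 0) by (apply not_0_IZR; auto).
    set (F := fun x => (fst z * sin (IZR m * x + c) + snd z * cos (IZR m * x + c)) / IZR m).
    assert (E : minus (F (2 * PI)) (F 0) = 0).
    { unfold F, minus, plus, opp; simpl. destruct (period_Z m c) as [H1 H2].
      rewrite H1, H2. rewrite Rmult_0_r, Rplus_0_l. field. auto. }
    enough (H : is_RInt (fun x => fst (Cmult z (cexpi (IZR m * x + c)))) 0 (2 * PI) (minus (F (2 * PI)) (F 0))) by (rewrite E in H; exact H).
    apply (is_RInt_derive (V := R_CompleteNormedModule)).
    + intros x _. unfold F. auto_derive. auto. unfold cexpi; simpl. field. auto.
    + intros x _. unfold cexpi; simpl. apply (ex_derive_continuous (V := R_NormedModule)). auto_derive. auto.
Qed.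

Lemma is_RInt_zero {V : NormedModule R_AbsRing} a b : is_RInt (fun _ => @zero V) a b zero.
Proof. pose proof (is_RInt_const (V:=V) a b zero). assert (E : scal (b - a) (@zero V) = zero) by (exact (@scal_zero_r (AbsRing.Ring R_AbsRing) (NormedModule.ModuleSpace R_AbsRing V) (b - a))).
 unfold is_RInt in *. rewrite E in H. exact H. Qed.

Lemma is_RInt_rs {A} (l : list A) (f : A -> R -> R) a b v :
  (forall j, In j l -> is_RInt (f j) a b (v j)) ->
  is_RInt (fun x => rs l (fun j => f j x)) a b (rs l v).
Proof.
  induction l; intros H; simpl.
  - apply (is_RInt_zero (V := R_NormedModule)).
  - apply (is_RInt_plus (V := R_NormedModule)). apply H; simpl; auto. apply IHl; intros; apply H; simpl; auto.
Qed.

Lemma is_RInt_cs {A} (l : list A) (f : A -> R -> C) a b v :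
  (forall j, In j l -> is_RInt (V := C_R_NormedModule) (f j) a b (v j)) ->
  is_RInt (V := C_R_NormedModule) (fun x => cs l (fun j => f j x)) a b (cs l v).
Proof.
  induction l; intros H; simpl.
  - apply (is_RInt_zero (V := C_R_NormedModule)).
  - apply (is_RInt_plus (V := C_R_NormedModule)). apply H; simpl; auto. apply IHl; intros; apply H; simpl; auto.
Qed.

Lemma base_int_C (z : C) (m : Z) (c : R) :
  is_RInt (V := C_R_NormedModule) (fun x => Cmult z (cexpi (IZR m * x + c))) 0 (2 * PI)
    (if Z.eq_dec m 0 then Cmult (RtoC (2 * PI)) (Cmult z (cexpi c)) else RtoC 0).
Proof.
  apply (is_RInt_fct_extend_pair (U := R_NormedModule) (V := R_NormedModule)).
  - pose proof (base_int z m c). destruct (Z.eq_dec m 0); simpl in *; [| exact H].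
    replace (2 * PI * (fst z * cos c - snd z * sin c) - 0 * (fst z * sin c + snd z * cos c))
      with (2 * PI * (fst z * cos c - snd z * sin c)) by ring. exact H.
  - pose proof (base_int (Cmult z (0, -1)) m c). destruct (Z.eq_dec m 0); simpl in *.
    + eapply is_RInt_ext; [| replace (2 * PI * (fst z * sin c + snd z * cos c) + 0 * (fst z * cos c - snd z * sin c)) with
         (2 * PI * ((fst z * 0 - snd z * -1) * cos c - (fst z * -1 + snd z * 0) * sin c)) by ring; exact H].
      intros; simpl; ring.
    + eapply is_RInt_ext; [| exact H]. intros; simpl; ring.
Qed.

Definition trm (z : C) (tau t : R) := fst z * cos (tau * t) + snd z * sin (tau * t).

Definition Gr {A} (J : list A) (g : A -> C) (xi : A -> Z) (ph : A -> R) (t : R) : R :=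
  rs J (fun j => rs J (fun k => if Z.eq_dec (xi j) (xi k)
     then 2 * PI * trm (Cmult (g j) (Cconj (g k))) (ph j - ph k) t else 0)).

Lemma gram {A} (J : list A) g xi ph t :
  is_RInt (fun x => Cmod (cs J (fun j => Cmult (g j) (cexpi (IZR (xi j) * x - ph j * t)))) ^ 2)
     0 (2 * PI) (Gr J g xi ph t).
Proof.
  apply (is_RInt_ext (fun x => rs J (fun j => rs J (fun k =>
       fst (Cmult (Cmult (g j) (Cconj (g k))) (cexpi (IZR (xi j - xi k) * x + (- (ph j - ph k) * t)))))))).
  { intros x _. rewrite Cmod2_cs. apply rs_ext; intros j _. apply rs_ext; intros k _.
    f_equal. rewrite Cmult_conj, cexpi_conj.
    replace (IZR (xi j - xi k) * x + - (ph j - ph k) * t) with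
      ((IZR (xi j) * x - ph j * t) + - (IZR (xi k) * x - ph k * t)) by (rewrite minus_IZR; ring).
    rewrite <- cexpi_mult. ring. }
  replace (Gr J g xi ph t) with (rs J (fun j => rs J (fun k =>
     if Z.eq_dec (xi j - xi k) 0 then 2 * PI * fst (Cmult (Cmult (g j) (Cconj (g k))) (cexpi (- (ph j - ph k) * t))) else 0))).
  apply is_RInt_rs; intros j _. apply is_RInt_rs; intros k _. apply base_int.
  unfold Gr. apply rs_ext; intros j _. apply rs_ext; intros k _.
  destruct (Z.eq_dec (xi j - xi k) 0); destruct (Z.eq_dec (xi j) (xi k)); try lia; auto.
  unfold trm, cexpi. replace (- (ph j - ph k) * t) with (- ((ph j - ph k) * t)) by ring. rewrite cos_neg, sin_neg. simpl. ring.
Qed.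

Definition Inn D z tau s := if Req_EM_T tau 0 then 2 * D * fst z else
  ((fst z * sin (tau * (s + 2 * D)) - snd z * cos (tau * (s + 2 * D))) - (fst z * sin (tau * s) - snd z * cos (tau * s))) / tau.
Definition Gp D z tau s := (- fst z * cos (tau * (s + 2 * D)) - snd z * sin (tau * (s + 2 * D))
   + fst z * cos (tau * s) + snd z * sin (tau * s)) / (tau * tau).
Definition Out D z tau := if Req_EM_T tau 0 then 2 * D * D * fst z else Gp D z tau 0 - Gp D z tau (- D).
Definition wgt D tau := if Req_EM_T tau 0 then 2 * D * D else 4 / (tau * tau).

Lemma inn_int D z tau s : is_RInt (trm z tau) s (s + 2 * D) (Inn D z tau s).
Proof.
  unfold Inn. destruct (Req_EM_T tau 0).
  - subst. apply (is_RInt_ext (fun _ => fst z)). intros; unfold trm. rewrite Rmult_0_l, cos_0, sin_0, Rmult_1_r, Rmult_0_r, Rplus_0_r. reflexivity.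
    replace (2 * D * fst z) with (scal (s + 2 * D - s) (fst z)). apply (is_RInt_const (V := R_NormedModule)).
    unfold scal; simpl; unfold mult; simpl; ring.
  - set (F := fun t => (fst z * sin (tau * t) - snd z * cos (tau * t)) / tau).
    assert (E : minus (F (s + 2 * D)) (F s) = ((fst z * sin (tau * (s + 2 * D)) - snd z * cos (tau * (s + 2 * D))) - (fst z * sin (tau * s) - snd z * cos (tau * s))) / tau).
    { unfold F, minus, plus, opp; simpl. field. auto. }
    rewrite <- E. apply (is_RInt_derive (V := R_CompleteNormedModule) F).
    + intros x _. unfold F, trm. auto_derive. auto. field. auto.
    + intros x _. unfold trm. apply (ex_derive_continuous (V := R_NormedModule)). auto_derive. auto.
Qed.

Lemma out_int D z tau : is_RInt (Inn D z tau) (- D) 0 (Out D z tau).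
Proof.
  unfold Out, Inn. destruct (Req_EM_T tau 0).
  - replace (2 * D * D * fst z) with (scal (0 - - D) (2 * D * fst z)). apply (is_RInt_const (V := R_NormedModule)).
    unfold scal; simpl; unfold mult; simpl; ring.
  - assert (E : minus (Gp D z tau 0) (Gp D z tau (- D)) = Gp D z tau 0 - Gp D z tau (- D)) by reflexivity.
    rewrite <- E. apply (is_RInt_derive (V := R_CompleteNormedModule) (Gp D z tau)).
    + intros x _. unfold Gp. auto_derive. auto. field. auto.
    + intros x _. apply (ex_derive_continuous (V := R_NormedModule)). auto_derive. auto.
Qed.

Lemma abs_mul_cos a x : Rabs (a * cos x) <= Rabs a.
Proof. rewrite Rabs_mult. pose proof (COS_bound x). assert (Rabs (cos x) <= 1) by (apply Rabs_le; lra).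
  pose proof (Rabs_pos a). pose proof (Rabs_pos (cos x)). nra. Qed.
Lemma abs_mul_sin a x : Rabs (a * sin x) <= Rabs a.
Proof. rewrite Rabs_mult. pose proof (SIN_bound x). assert (Rabs (sin x) <= 1) by (apply Rabs_le; lra).
  pose proof (Rabs_pos a). pose proof (Rabs_pos (sin x)). nra. Qed.

Lemma out_bound D z tau : 0 < D ->
  Rabs (Out D z tau) <= (Rabs (fst z) + Rabs (snd z)) * wgt D tau.
Proof.
  intros HD. unfold Out, wgt. destruct (Req_EM_T tau 0).
  - rewrite Rabs_mult. rewrite (Rabs_right (2 * D * D)) by nra. pose proof (Rabs_pos (snd z)). nra.
  - assert (Ht : 0 < tau * tau) by nra.
    assert (HG : forall s, Rabs (Gp D z tau s) <= 2 * (Rabs (fst z) + Rabs (snd z)) / (tau * tau)).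
    { intros s. unfold Gp. unfold Rdiv. rewrite Rabs_mult. rewrite (Rabs_right (/ (tau * tau))) by (left; apply Rinv_0_lt_compat; auto).
      apply Rmult_le_compat_r. left; apply Rinv_0_lt_compat; auto.
      pose proof (abs_mul_cos (fst z) (tau * (s + 2 * D))). pose proof (abs_mul_sin (snd z) (tau * (s + 2 * D))).
      pose proof (abs_mul_cos (fst z) (tau * s)). pose proof (abs_mul_sin (snd z) (tau * s)).
      replace (- fst z * cos (tau * (s + 2 * D))) with (- (fst z * cos (tau * (s + 2 * D)))) by ring.
      unfold Rminus. 
      assert (T : forall a b c d, Rabs (a + b + c + d) <= Rabs a + Rabs b + Rabs c + Rabs d).
      { intros. pose proof (Rabs_triang (a + b + c) d). pose proof (Rabs_triang (a + b) c). pose proof (Rabs_triang a b). lra. }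
      eapply Rle_trans. apply T. rewrite !Rabs_Ropp. lra. }
    eapply Rle_trans. unfold Rminus. apply Rabs_triang. rewrite Rabs_Ropp.
    pose proof (HG 0). pose proof (HG (- D)). unfold Rdiv in *. lra.
Qed.

Lemma ex_derive_rs {A} (l : list A) (f : A -> R -> R) x :
  (forall j, In j l -> ex_derive (f j) x) -> ex_derive (fun t => rs l (fun j => f j t)) x.
Proof.
  induction l; intros H; simpl.
  - apply (ex_derive_const (V := R_NormedModule)).
  - apply (ex_derive_plus (V := R_NormedModule) (f a) (fun t => rs l (fun j => f j t))).
    apply H; simpl; auto. apply IHl; intros; apply H; simpl; auto.
Qed.

Lemma Gr_derive {A} (J : list A) g xi ph t : ex_derive (Gr J g xi ph) t.
Proof.
  unfold Gr. apply (ex_derive_rs J (fun j t => rs J (fun k => if Z.eq_dec (xi j) (xi k) then 2 * PI * trm (Cmult (g j) (Cconj (g k))) (ph j - ph k) t else 0))).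
  intros j _. apply (ex_derive_rs J (fun k t => if Z.eq_dec (xi j) (xi k) then 2 * PI * trm (Cmult (g j) (Cconj (g k))) (ph j - ph k) t else 0)).
  intros k _. destruct (Z.eq_dec (xi j) (xi k)). unfold trm. auto_derive. auto.
  apply (ex_derive_const (V := R_NormedModule)).
Qed.

Lemma Gr_exRInt {A} (J : list A) g xi ph a b : ex_RInt (Gr J g xi ph) a b.
Proof. apply (ex_RInt_continuous (V := R_CompleteNormedModule)). intros. apply (ex_derive_continuous (V := R_NormedModule)). apply Gr_derive. Qed.

Lemma Gr_nonneg {A} (J : list A) g xi ph t : 0 <= Gr J g xi ph t.
Proof.
  eapply (is_RInt_ge_0 _ 0 (2 * PI)). pose proof PI_RGT_0; lra. apply gram. intros; apply pow2_ge_0.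
Qed.

Lemma time_bound {A} (J : list A) g xi ph D delta : 0 < delta <= D ->
  RInt (Gr J g xi ph) 0 delta <= / D * rs J (fun j => rs J (fun k =>
     if Z.eq_dec (xi j) (xi k) then 2 * PI * ((Rabs (fst (Cmult (g j) (Cconj (g k)))) + Rabs (snd (Cmult (g j) (Cconj (g k)))))
        * wgt D (ph j - ph k)) else 0)).
Proof.
  intros [Hd HD].
  set (Gf := Gr J g xi ph).
  set (Is := fun s => rs J (fun j => rs J (fun k => if Z.eq_dec (xi j) (xi k)
        then 2 * PI * Inn D (Cmult (g j) (Cconj (g k))) (ph j - ph k) s else 0))).
  set (O := rs J (fun j => rs J (fun k => if Z.eq_dec (xi j) (xi k)
        then 2 * PI * Out D (Cmult (g j) (Cconj (g k))) (ph j - ph k) else 0))).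
  assert (H1 : forall s, is_RInt Gf s (s + 2 * D) (Is s)).
  { intros s. unfold Gf, Gr, Is. apply is_RInt_rs; intros j _. apply is_RInt_rs; intros k _.
    destruct (Z.eq_dec (xi j) (xi k)).
    - apply (is_RInt_scal (V := R_NormedModule) (trm _ _)). apply inn_int.
    - apply (is_RInt_zero (V := R_NormedModule)). }
  assert (H2 : is_RInt Is (- D) 0 O).
  { unfold Is, O. apply is_RInt_rs; intros j _. apply is_RInt_rs; intros k _.
    destruct (Z.eq_dec (xi j) (xi k)).
    - apply (is_RInt_scal (V := R_NormedModule) (Inn _ _ _)). apply out_int.
    - apply (is_RInt_zero (V := R_NormedModule)). }
  assert (Hex : forall a b, ex_RInt Gf a b) by (intros; apply Gr_exRInt).
  assert (Hnn : forall a b, a <= b -> 0 <= RInt Gf a b).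
  { intros. apply RInt_ge_0; auto. intros; apply Gr_nonneg. }
  assert (H3 : forall s, - D <= s <= 0 -> RInt Gf 0 D <= Is s).
  { intros s Hs. rewrite <- (is_RInt_unique _ _ _ _ (H1 s)).
    rewrite <- (RInt_Chasles Gf s 0 (s + 2 * D)) by auto.
    rewrite <- (RInt_Chasles Gf 0 D (s + 2 * D)) by auto.
    pose proof (Hnn s 0 (proj2 Hs)). assert (0 <= RInt Gf D (s + 2 * D)) by (apply Hnn; lra).
    unfold plus; simpl. lra. }
  assert (H4 : D * RInt Gf 0 D <= O).
  { apply (is_RInt_le (fun _ => RInt Gf 0 D) Is (- D) 0). lra.
    replace (D * RInt Gf 0 D) with (scal (0 - - D) (RInt Gf 0 D)).
    apply (is_RInt_const (V := R_NormedModule)). unfold scal; simpl; unfold mult; simpl; ring.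
    auto. intros; apply H3; lra. }
  assert (H5 : O <= rs J (fun j => rs J (fun k =>
     if Z.eq_dec (xi j) (xi k) then 2 * PI * ((Rabs (fst (Cmult (g j) (Cconj (g k)))) + Rabs (snd (Cmult (g j) (Cconj (g k)))))
        * wgt D (ph j - ph k)) else 0))).
  { unfold O. apply rs_le; intros j _. apply rs_le; intros k _. destruct (Z.eq_dec (xi j) (xi k)); [|lra].
    apply Rmult_le_compat_l. pose proof PI_RGT_0; lra.
    eapply Rle_trans. apply Rle_abs. apply out_bound. lra. }
  assert (H6 : RInt Gf 0 delta <= RInt Gf 0 D).
  { rewrite <- (RInt_Chasles Gf 0 delta D) by auto. pose proof (Hnn delta D HD). unfold plus; simpl. lra. }
  assert (RInt Gf 0 D <= / D * O).
  { apply (Rmult_le_reg_l D). lra. rewrite <- Rmult_assoc, Rinv_r, Rmult_1_l by lra. auto. }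
  assert (/ D * O <= / D * rs J (fun j => rs J (fun k =>
     if Z.eq_dec (xi j) (xi k) then 2 * PI * ((Rabs (fst (Cmult (g j) (Cconj (g k)))) + Rabs (snd (Cmult (g j) (Cconj (g k)))))
        * wgt D (ph j - ph k)) else 0))).
  { apply Rmult_le_compat_l. left; apply Rinv_0_lt_compat; lra. auto. }
  lra.
Qed.

Definition hh (w0 c : R) (d : Z) : R := if Z.eq_dec d 0 then w0 else c / (IZR d * IZR d).
Definition Pot (w0 c : R) (d : Z) : R :=
  if Z_le_gt_dec 1 d then w0 + 4 * c - 2 * c / (IZR d + 1)
  else if Z.eq_dec d 0 then w0 + 2 * c else 2 * c / IZR (- d).

Lemma Pot_step w0 c d : 0 <= w0 -> 0 <= c -> hh w0 c d <= Pot w0 c d - Pot w0 c (d - 1).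
Proof.
  intros Hw Hc. unfold hh, Pot.
  destruct (Z_le_gt_dec 1 d); destruct (Z.eq_dec d 0); try lia.
  - destruct (Z_le_gt_dec 1 (d - 1)); destruct (Z.eq_dec (d - 1) 0); try lia.
    + rewrite minus_IZR. assert (1 <= IZR (d - 1)) by (apply IZR_le; lia). rewrite minus_IZR in H.
      set (x := IZR d) in *. assert (2 <= x) by lra.
      replace (w0 + 4 * c - 2 * c / (x + 1) - (w0 + 4 * c - 2 * c / (x - 1 + 1))) with (2 * c / (x * (x + 1))) by (field; lra).
      assert (E : 2 * c / (x * (x + 1)) - c / (x * x) = c * (x - 1) / (x * x * (x + 1))) by (field; lra).
      assert (0 <= c * (x - 1) / (x * x * (x + 1))). { apply Rmult_le_pos. nra. left; apply Rinv_0_lt_compat. nra. }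
      lra.
    + assert (d = 1%Z) by lia. subst. simpl. replace (1 + 1) with 2 by ring. unfold Rdiv. lra.
  - subst. simpl. destruct (Z_le_gt_dec 1 (0 - 1)); destruct (Z.eq_dec (0 - 1) 0); try lia. simpl.
    replace (2 * c / 1) with (2 * c) by field. lra.
  - destruct (Z_le_gt_dec 1 (d - 1)); destruct (Z.eq_dec (d - 1) 0); try lia.
    assert (1 <= IZR (- d)) by (apply IZR_le; lia). rewrite opp_IZR in *.
    replace (- (d - 1))%Z with (- d + 1)%Z by lia. rewrite plus_IZR, opp_IZR.
    set (e := - IZR d) in *. replace (IZR d * IZR d) with (e * e) by (unfold e; ring).
    replace (2 * c / e - 2 * c / (e + 1)) with (2 * c / (e * (e + 1))) by (field; lra).
    assert (E : 2 * c / (e * (e + 1)) - c / (e * e) = c * (e - 1) / (e * e * (e + 1))) by (field; lra).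
    assert (0 <= c * (e - 1) / (e * e * (e + 1))). { apply Rmult_le_pos. nra. left; apply Rinv_0_lt_compat. nra. }
    lra.
Qed.

Lemma Pot_bound w0 c d : 0 <= w0 -> 0 <= c -> 0 <= Pot w0 c d <= w0 + 4 * c.
Proof.
  intros Hw Hc. unfold Pot. destruct (Z_le_gt_dec 1 d).
  - assert (1 <= IZR d) by (apply IZR_le; lia).
    assert (0 <= 2 * c / (IZR d + 1) <= c).
    { split. apply Rmult_le_pos. lra. left; apply Rinv_0_lt_compat; lra.
      apply (Rmult_le_reg_r (IZR d + 1)). lra. unfold Rdiv. rewrite Rmult_assoc, Rinv_l by lra. nra. }
    lra.
  - destruct (Z.eq_dec d 0). lra.
    assert (1 <= IZR (- d)) by (apply IZR_le; lia).
    assert (0 <= 2 * c / IZR (- d) <= 2 * c).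
    { split. apply Rmult_le_pos. lra. left; apply Rinv_0_lt_compat; lra.
      apply (Rmult_le_reg_r (IZR (- d))). lra. unfold Rdiv. rewrite Rmult_assoc, Rinv_l by lra. nra. }
    lra.
Qed.

Lemma hh_sum w0 c (cc : Z) L : 0 <= w0 -> 0 <= c ->
  rs (seq 0 L) (fun j => hh w0 c (cc - Z.of_nat j)) <= w0 + 4 * c.
Proof.
  intros Hw Hc.
  assert (forall L, rs (seq 0 L) (fun j => hh w0 c (cc - Z.of_nat j)) <= Pot w0 c cc - Pot w0 c (cc - Z.of_nat L)).
  { induction L0. simpl. replace (cc - 0)%Z with cc by lia. lra.
    rewrite seq_S, rs_app, rs_cons, rs_nil. simpl plus. pose proof (Pot_step w0 c (cc - Z.of_nat L0) Hw Hc).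
    replace (cc - Z.of_nat L0 - 1)%Z with (cc - Z.of_nat (S L0))%Z in H by lia. rewrite Nat.add_0_l. lra. }
  pose proof (H L). pose proof (Pot_bound w0 c cc Hw Hc). pose proof (Pot_bound w0 c (cc - Z.of_nat L) Hw Hc). lra.
Qed.

Lemma hh_zr w0 c M n : 0 <= w0 -> 0 <= c ->
  rs (zr M) (fun n' => hh w0 c (n - n')) <= w0 + 4 * c.
Proof.
  intros. unfold zr. rewrite rs_map.
  rewrite (rs_ext _ _ (fun j => hh w0 c ((n + Z.of_nat M) - Z.of_nat j))).
  apply hh_sum; auto. intros; f_equal; lia.
Qed.

Lemma schur {A} (J : list A) (W : A -> A -> R) (a : A -> R) :
  (forall j k, W j k = W k j) ->
  rs J (fun j => rs J (fun k => W j k * (a j ^ 2 + a k ^ 2))) = 2 * rs J (fun j => a j ^ 2 * rs J (fun k => W j k)).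
Proof.
  intros Hs.
  rewrite (rs_ext J _ (fun j => rs J (fun k => a j ^ 2 * W j k) + rs J (fun k => W k j * a k ^ 2))).
  rewrite rs_plus. rewrite (rs_swap J J (fun j k => W k j * a k ^ 2)).
  rewrite (rs_ext J (fun j => rs J (fun k => a j ^ 2 * W j k)) (fun j => a j ^ 2 * rs J (fun k => W j k))).
  rewrite (rs_ext J (fun b => rs J (fun a0 => W b a0 * a b ^ 2)) (fun j => a j ^ 2 * rs J (fun k => W j k))). ring.
  intros x _. rewrite rs_scal_r. apply Rmult_comm.
  intros; apply rs_scal.
  intros j _. rewrite <- rs_plus. apply rs_ext; intros k _. rewrite (Hs k j). ring.
Qed.

Lemma re_im_le (z : C) : Rabs (fst z) + Rabs (snd z) <= 2 * Cmod z.
Proof.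
  destruct z as [x y]. unfold Cmod. cbn [fst snd].
  assert (Rabs x <= sqrt (x ^ 2 + y ^ 2)).
  { rewrite <- sqrt_Rsqr_abs. apply sqrt_le_1_alt. unfold Rsqr. nra. }
  assert (Rabs y <= sqrt (x ^ 2 + y ^ 2)).
  { rewrite <- sqrt_Rsqr_abs. apply sqrt_le_1_alt. unfold Rsqr. nra. }
  lra.
Qed.

Lemma wgt_sym D t : wgt D (- t) = wgt D t.
Proof. unfold wgt. destruct (Req_EM_T (- t) 0); destruct (Req_EM_T t 0); try lra. f_equal; ring. Qed.
Lemma wgt_nonneg D t : wgt D t >= 0.
Proof. unfold wgt. destruct (Req_EM_T t 0). nra. apply Rle_ge. unfold Rdiv. apply Rmult_le_pos. lra.
  left; apply Rinv_0_lt_compat. assert (t * t > 0) by nra. lra. Qed.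

Lemma block_bound (MK : nat) (L3 : list Z) (s : Z) (g : Z * Z -> C) (ph : Z * Z -> R) (Lam D delta : R) :
  NoDup L3 -> (s = 1 \/ s = -1)%Z -> 0 < Lam -> 0 < delta <= D ->
  (forall j k, In j (list_prod (zr MK) L3) -> In k (list_prod (zr MK) L3) ->
     (fst j + s * snd j = fst k + s * snd k)%Z -> fst j <> fst k ->
     Lam * Rabs (IZR (fst j - fst k)) <= Rabs (ph j - ph k)) ->
  RInt (Gr (list_prod (zr MK) L3) g (fun j => (fst j + s * snd j)%Z) ph) 0 delta <=
  / D * (2 * (2 * PI * (2 * D * D + 16 / (Lam * Lam)))) * rs (list_prod (zr MK) L3) (fun j => Cmod (g j) ^ 2).
Proof.
  intros HL3 Hs HLam Hd Hsep.
  set (J := list_prod (zr MK) L3).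
  set (xi := fun j : Z * Z => (fst j + s * snd j)%Z).
  set (W := fun j k => if Z.eq_dec (xi j) (xi k) then 2 * PI * wgt D (ph j - ph k) else 0).
  eapply Rle_trans. apply (time_bound _ _ _ _ D); auto.
  rewrite Rmult_assoc. apply Rmult_le_compat_l. left; apply Rinv_0_lt_compat; lra.
  assert (HPI := PI_RGT_0).
  eapply Rle_trans with (rs J (fun j => rs J (fun k => W j k * (Cmod (g j) ^ 2 + Cmod (g k) ^ 2)))).
  { apply rs_le; intros j _. apply rs_le; intros k _. unfold W.
    destruct (Z.eq_dec (xi j) (xi k)); [| lra].
    pose proof (re_im_le (Cmult (g j) (Cconj (g k)))). rewrite Cmod_mult, Cmod_conj in H.
    pose proof (wgt_nonneg D (ph j - ph k)).
    assert (2 * (Cmod (g j) * Cmod (g k)) <= Cmod (g j) ^ 2 + Cmod (g k) ^ 2).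
    { pose proof (pow2_ge_0 (Cmod (g j) - Cmod (g k))). nra. }
    assert (0 <= PI * wgt D (ph j - ph k)) by nra. nra. }
  rewrite schur.
  2: { intros j k. unfold W. destruct (Z.eq_dec (xi j) (xi k)); destruct (Z.eq_dec (xi k) (xi j)); try lia; auto.
       replace (ph k - ph j) with (- (ph j - ph k)) by ring. rewrite wgt_sym. auto. }
  rewrite Rmult_assoc. apply Rmult_le_compat_l. lra.
  rewrite <- rs_scal. apply rs_le; intros j Hj. rewrite (Rmult_comm _ (Cmod (g j) ^ 2)). apply Rmult_le_compat_l. apply pow2_ge_0.
  unfold J. rewrite rs_prod.
  eapply Rle_trans with (rs (zr MK) (fun n' => 2 * PI * hh (2 * D * D) (4 / (Lam * Lam)) (fst j - n'))).
  { apply rs_le; intros n' Hn'.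
    eapply Rle_trans with (rs L3 (fun n3' => if Z.eq_dec (xi j) (xi (n', n3')) then 2 * PI * hh (2 * D * D) (4 / (Lam * Lam)) (fst j - n') else 0)).
    - apply rs_le; intros n3' Hn3'. unfold W. destruct (Z.eq_dec (xi j) (xi (n', n3'))); [| lra].
      apply Rmult_le_compat_l. lra. unfold hh. destruct (Z.eq_dec (fst j - n') 0).
      + assert (n' = fst j) by lia. subst n'. unfold xi in e; simpl in e.
        assert (snd j = n3') by (destruct Hs; subst; lia).
        destruct j as [j1 j2]; simpl in *; subst. replace (ph (j1, n3') - ph (j1, n3')) with 0 by ring.
        unfold wgt. destruct (Req_EM_T 0 0); lra.
      + assert (Hin : In (n', n3') J) by (apply in_prod; auto).
        pose proof (Hsep j (n', n3') Hj Hin e). simpl in H. specialize (H ltac:(lia)).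
        rewrite <- (Rabs_right (Lam)) in H by lra. rewrite <- Rabs_mult in H.
        assert (Hd0 : IZR (fst j - n') <> 0) by (apply not_0_IZR; auto).
        unfold wgt. destruct (Req_EM_T (ph j - ph (n', n3')) 0).
        { rewrite e0, Rabs_R0 in H. assert (Lam * IZR (fst j - n') <> 0) by (apply Rmult_integral_contrapositive; split; lra).
          pose proof (Rabs_pos_lt _ H0). lra. }
        set (d := IZR (fst j - n')) in *. set (tau := ph j - ph (n', n3')) in *.
        assert (Hsq : (Lam * d) * (Lam * d) <= tau * tau).
        { assert (A1 : Rabs (Lam * d) * Rabs (Lam * d) <= Rabs tau * Rabs tau) by (pose proof (Rabs_pos (Lam * d)); nra).
          rewrite <- !Rabs_mult in A1. rewrite !Rabs_right in A1 by nra. exact A1. }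
        assert (0 < (Lam * d) * (Lam * d)). { assert (Lam * d <> 0) by (apply Rmult_integral_contrapositive; split; lra). nra. }
        replace (4 / (Lam * Lam) / (d * d)) with (4 / ((Lam * d) * (Lam * d))) by (field; lra).
        unfold Rdiv. apply Rmult_le_compat_l. lra. apply Rinv_le_contravar; auto.
    - apply (rs_indic_le L3 (fun n3' => xi j = xi (n', n3')) (fun n3' => Z.eq_dec (xi j) (xi (n', n3')))).
      auto. apply Rmult_le_pos. lra. unfold hh. destruct (Z.eq_dec (fst j - n') 0). nra.
      unfold Rdiv. apply Rmult_le_pos. apply Rmult_le_pos. lra. left; apply Rinv_0_lt_compat; nra.
      left; apply Rinv_0_lt_compat. assert (IZR (fst j - n') <> 0) by (apply not_0_IZR; auto). nra.
      intros x y _ _ Hx Hy. unfold xi in *; simpl in *. destruct Hs; subst; lia. }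
  rewrite rs_scal. apply Rmult_le_compat_l. lra. replace (16 / (Lam * Lam)) with (4 * (4 / (Lam * Lam))) by (field; lra). apply hh_zr. nra. unfold Rdiv. apply Rmult_le_pos. lra. left; apply Rinv_0_lt_compat; nra.
Qed.

Lemma cexpi_eq a b : a = b -> cexpi a = cexpi b.
Proof. intros ->; reflexivity. Qed.

Lemma free_evol_cs k a t x : free_evol k a t x = cs (zr (bnd k)) (fun n => Cmult (a n) (cexpi (IZR n * x - IZR n ^ 2 * t))).
Proof. unfold free_evol. apply zsum_cs. Qed.

Lemma fcoef_prod k1 k2 a1 a2 t n : supp_in k1 a1 ->
  fcoef (fun y => Cmult (free_evol k1 a1 t y) (Cconj (free_evol k2 a2 t y))) n =
  cs (zr (bnd k2)) (fun n2 => Cmult (Cmult (a1 (n2 + n)%Z) (Cconj (a2 n2)))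
        (cexpi (- (IZR (n2 + n) ^ 2 - IZR n2 ^ 2) * t))).
Proof.
  intros Hs1. set (R1 := zr (bnd k1)). set (R2 := zr (bnd k2)).
  set (T := cs R2 (fun n2 => Cmult (Cmult (a1 (n2 + n)%Z) (Cconj (a2 n2)))
        (cexpi (- (IZR (n2 + n) ^ 2 - IZR n2 ^ 2) * t)))).
  assert (HI : is_RInt (V := C_R_NormedModule)
     (fun x => Cmult (Cmult (free_evol k1 a1 t x) (Cconj (free_evol k2 a2 t x))) (cexpi (- (IZR n * x)))) 0 (2 * PI)
     (Cmult (RtoC (2 * PI)) T)).
  { apply (is_RInt_ext (V := C_R_NormedModule) (fun x => cs R1 (fun n1 => cs R2 (fun n2 =>
        Cmult (Cmult (a1 n1) (Cconj (a2 n2))) (cexpi (IZR (n1 - n2 - n) * x + (- (IZR n1 ^ 2 - IZR n2 ^ 2) * t))))))).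
    { intros x _. rewrite !free_evol_cs. fold R1 R2. rewrite cs_conj, cs_mult, <- cs_mult_r.
      apply cs_ext; intros n1 _. rewrite <- cs_mult_r. apply cs_ext; intros n2 _.
      rewrite Cmult_conj, cexpi_conj.
      assert (E : cexpi (IZR (n1 - n2 - n) * x + - (IZR n1 ^ 2 - IZR n2 ^ 2) * t) =
         Cmult (Cmult (cexpi (IZR n1 * x - IZR n1 ^ 2 * t)) (cexpi (- (IZR n2 * x - IZR n2 ^ 2 * t)))) (cexpi (- (IZR n * x)))).
      { rewrite !cexpi_mult. apply cexpi_eq. rewrite !minus_IZR. ring. }
      rewrite E. ring. }
    replace (Cmult (RtoC (2 * PI)) T) with (cs R1 (fun n1 => cs R2 (fun n2 =>
       if Z.eq_dec (n1 - n2 - n) 0 then Cmult (RtoC (2 * PI)) (Cmult (Cmult (a1 n1) (Cconj (a2 n2))) (cexpi (- (IZR n1 ^ 2 - IZR n2 ^ 2) * t))) else RtoC 0))).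
    - apply is_RInt_cs; intros n1 _. apply is_RInt_cs; intros n2 _. apply base_int_C.
    - rewrite cs_swap. unfold T. rewrite <- cs_mult_l. apply cs_ext; intros n2 _.
      rewrite (cs_ext R1 _ (fun n1 => if Z.eq_dec n1 (n2 + n) then Cmult (RtoC (2 * PI)) (Cmult (Cmult (a1 n1) (Cconj (a2 n2))) (cexpi (- (IZR n1 ^ 2 - IZR n2 ^ 2) * t))) else RtoC 0)).
      apply cs_collapse. apply NoDup_zr.
      intros Hn. rewrite (supp_out k1 a1 (n2 + n) Hs1 Hn). apply injective_projections; simpl; ring.
      intros n1 _. destruct (Z.eq_dec (n1 - n2 - n) 0); destruct (Z.eq_dec n1 (n2 + n)); try lia; auto. }
  unfold fcoef. rewrite (is_RInt_unique (V := C_R_CompleteNormedModule) _ _ _ _ HI).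
  assert (PI <> 0) by (pose proof PI_RGT_0; lra).
  transitivity (Cmult (Cmult (RtoC (/ (2 * PI))) (RtoC (2 * PI))) T). ring.
  replace (Cmult (RtoC (/ (2 * PI))) (RtoC (2 * PI))) with (RtoC 1). ring.
  apply injective_projections; simpl; field; auto.
Qed.

Definition cc (eta : R -> R) (m : Z -> C) kK n := Cmult (m n) (RtoC (eta (IZR n / dy kK))).
Definition sgnz (cj : bool) : Z := if cj then (-1)%Z else 1%Z.
Definition b3 (cj : bool) (a3 : Z -> C) n3 := if cj then Cconj (a3 n3) else a3 n3.
Definition bet eta m kK cj (a1 a3 : Z -> C) (n2 : Z) (j : Z * Z) :=
  Cmult (Cmult (cc eta m kK (fst j)) (a1 (n2 + fst j)%Z)) (b3 cj a3 (snd j)).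
Definition xiF cj (j : Z * Z) : Z := (fst j + sgnz cj * snd j)%Z.
Definition phF cj (n2 : Z) (j : Z * Z) : R :=
  IZR ((n2 + fst j) * (n2 + fst j) - n2 * n2 + sgnz cj * (snd j * snd j))%Z.
Definition Hf eta m kK k3 cj a1 a3 n2 t x :=
  cs (list_prod (zr (bnd kK)) (zr (bnd k3)))
     (fun j => Cmult (bet eta m kK cj a1 a3 n2 j) (cexpi (IZR (xiF cj j) * x - phF cj n2 j * t))).

Lemma U3_cs (k3 : nat) (cj : bool) (a3 : Z -> C) (t x : R) :
  (if cj then Cconj (free_evol k3 a3 t x) else free_evol k3 a3 t x) =
  cs (zr (bnd k3)) (fun n3 => Cmult (b3 cj a3 n3) (cexpi (IZR (sgnz cj) * (IZR n3 * x - IZR n3 ^ 2 * t)))).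
Proof.
  rewrite free_evol_cs. unfold b3, sgnz. destruct cj.
  - rewrite cs_conj. apply cs_ext; intros. rewrite Cmult_conj, cexpi_conj. f_equal. apply cexpi_eq. simpl; ring.
  - apply cs_ext; intros. f_equal. apply cexpi_eq. simpl; ring.
Qed.

Lemma output_decomp eta m kK k1 k2 k3 cj a1 a2 a3 t x : supp_in k1 a1 ->
  output eta m kK k1 k2 k3 cj a1 a2 a3 t x =
  cs (zr (bnd k2)) (fun n2 => Cmult (Cconj (a2 n2)) (Hf eta m kK k3 cj a1 a3 n2 t x)).
Proof.
  intros Hs1. unfold output, mult_op. rewrite U3_cs, zsum_cs.
  rewrite (cs_ext (zr (bnd kK)) _ (fun n => Cmult (cc eta m kK n) (Cmult
      (cs (zr (bnd k2)) (fun n2 => Cmult (Cmult (a1 (n2 + n)%Z) (Cconj (a2 n2)))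
        (cexpi (- (IZR (n2 + n) ^ 2 - IZR n2 ^ 2) * t)))) (cexpi (IZR n * x))))).
  2: { intros n _. rewrite fcoef_prod; auto. }
  rewrite <- cs_mult_r.
  rewrite (cs_ext (zr (bnd kK)) _ (fun n => cs (zr (bnd k2)) (fun n2 => cs (zr (bnd k3)) (fun n3 =>
     Cmult (Cconj (a2 n2)) (Cmult (bet eta m kK cj a1 a3 n2 (n, n3)) (cexpi (IZR (xiF cj (n, n3)) * x - phF cj n2 (n, n3) * t))))))).
  - rewrite cs_swap. apply cs_ext; intros n2 _. unfold Hf. rewrite <- cs_mult_l, cs_prod. reflexivity.
  - intros n _. 
    rewrite <- (cs_mult_r (zr (bnd k2))), <- (cs_mult_l (zr (bnd k2))), cs_mult.
    apply cs_ext; intros n2 _. apply cs_ext; intros n3 _.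
    unfold bet, xiF, phF; simpl fst; simpl snd.
    assert (E : cexpi (IZR (n + sgnz cj * n3) * x - IZR ((n2 + n) * (n2 + n) - n2 * n2 + sgnz cj * (n3 * n3)) * t) =
      Cmult (Cmult (cexpi (- (IZR (n2 + n) ^ 2 - IZR n2 ^ 2) * t)) (cexpi (IZR n * x)))
            (cexpi (IZR (sgnz cj) * (IZR n3 * x - IZR n3 ^ 2 * t)))).
    { rewrite !cexpi_mult. apply cexpi_eq. rewrite !plus_IZR, !minus_IZR, !mult_IZR, !plus_IZR. ring. }
    rewrite E. ring.
Qed.

Lemma rs_collapse (l : list Z) (y : Z) (g : Z -> R) :
  NoDup l -> In y l -> rs l (fun x => if Z.eq_dec y x then g x else 0) = g y.
Proof.
  induction l; intros Hn Hy; simpl. inversion Hy.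
  inversion Hn; subst. destruct (Z.eq_dec y a).
  - subst. rewrite (rs_ext l _ (fun _ => 0)). rewrite rs_zero. ring.
    intros x Hx. destruct (Z.eq_dec a x); auto. subst; contradiction.
  - destruct Hy. subst; contradiction. rewrite IHl; auto. ring.
Qed.

Lemma parseval k a : l2T (phi_fun k a) = sqrt (2 * PI * rs (zr (bnd k)) (fun n => Cmod (a n) ^ 2)).
Proof.
  unfold l2T, phi_fun. f_equal.
  assert (H : is_RInt (fun x => Cmod (free_evol k a 0 x) ^ 2) 0 (2 * PI) (Gr (zr (bnd k)) a (fun n => n) (fun n => IZR n ^ 2) 0)).
  { eapply is_RInt_ext; [| apply gram]. intros x _. rewrite free_evol_cs. reflexivity. }
  rewrite (is_RInt_unique (V := R_CompleteNormedModule) _ _ _ _ H).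
  unfold Gr. rewrite <- rs_scal. apply rs_ext; intros j Hj.
  rewrite rs_collapse; auto. 2: apply NoDup_zr.
  unfold trm. rewrite Rmult_0_r, cos_0, sin_0. replace (Cmod (a j) ^ 2) with (fst (RtoC (Cmod (a j) ^ 2))) by reflexivity. rewrite Cmod2_conj. ring.
Qed.

Lemma zr_abs k n : In n (zr (bnd k)) -> Rabs (IZR n) <= 2 * dy k.
Proof.
  intros H. apply In_zr in H. rewrite <- IZR_bnd. destruct H as [H1 H2].
  apply IZR_le in H1. apply IZR_le in H2. rewrite opp_IZR in H1. unfold Rabs. destruct (Rcase_abs (IZR n)); lra.
Qed.

Lemma rs_const {A} (l : list A) c : rs l (fun _ => c) = c * INR (length l).
Proof. induction l; simpl length. simpl. ring. rewrite rs_cons, IHl. rewrite S_INR. ring. Qed.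

Lemma zr_length M : length (zr M) = (2 * M + 1)%nat.
Proof. unfold zr. rewrite length_map, length_seq. auto. Qed.

Lemma shift_sum (M M1 : nat) (f : Z -> R) n :
  (forall y, 0 <= f y) -> (forall y, ~ In y (zr M1) -> f y = 0) ->
  rs (zr M) (fun n2 => f (n2 + n)%Z) <= rs (zr M1) f.
Proof.
  intros Hf Hs.
  rewrite (rs_ext (zr M) _ (fun n2 => rs (zr M1) (fun y => if Z.eq_dec (n2 + n) y then f y else 0))).
  2: { intros n2 _. destruct (in_dec Z.eq_dec (n2 + n)%Z (zr M1)).
       rewrite rs_collapse; auto. apply NoDup_zr.
       rewrite Hs; auto. rewrite (rs_ext _ _ (fun _ => 0)). symmetry; apply rs_zero.
       intros y Hy. destruct (Z.eq_dec (n2 + n) y); auto. subst; contradiction. }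
  rewrite rs_swap. apply rs_le; intros y _.
  apply (rs_indic_le (zr M) (fun x => (x + n)%Z = y) (fun x => Z.eq_dec (x + n) y)).
  apply NoDup_zr. auto. intros; lia.
Qed.

Lemma eta_bounds eta : eta_ok eta -> forall x, 0 <= eta x <= 1.
Proof.
  intros (_ & _ & _ & H) x. destruct (H x) as [H1 H2]. unfold chi in *.
  destruct (Rle_dec (Rabs x) (4 / 3)); destruct (Rle_dec (Rabs x) (5 / 3)); lra.
Qed.

Lemma key_bound eta m kK k1 k2 k3 cj a1 a2 a3 (B D Lam delta : R) :
  eta_ok eta -> 0 <= B -> (forall n, Cmod (m n) <= B) ->
  supp_in k1 a1 -> supp_in k2 a2 -> (1 <= k2)%nat ->
  0 < Lam -> 0 < delta <= D ->
  (forall n2 n n' n3 n3', dy k2 / 2 <= Rabs (IZR n2) ->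
     In n (zr (bnd kK)) -> In n' (zr (bnd kK)) -> In n3 (zr (bnd k3)) -> In n3' (zr (bnd k3)) ->
     Lam <= Rabs (IZR (2 * n2 + n + n' - (n3 + n3')))) ->
  RInt (fun t => RInt (fun x => Cmod (output eta m kK k1 k2 k3 cj a1 a2 a3 t x) ^ 2) 0 (2 * PI)) 0 delta
  <= rs (zr (bnd k2)) (fun n => Cmod (a2 n) ^ 2) *
     ((/ D * (2 * (2 * PI * (2 * D * D + 16 / (Lam * Lam))))) *
      (B ^ 2 * (rs (zr (bnd k3)) (fun n => Cmod (a3 n) ^ 2) *
        (INR (2 * bnd kK + 1) * rs (zr (bnd k1)) (fun n => Cmod (a1 n) ^ 2))))).
Proof.
  intros Heta HB Hm Hs1 Hs2 Hk2 HLam Hd Hsep.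
  set (R1 := zr (bnd k1)). set (R2 := zr (bnd k2)). set (R3 := zr (bnd k3)). set (RK := zr (bnd kK)).
  set (J := list_prod RK R3).
  set (A1 := rs R1 (fun n => Cmod (a1 n) ^ 2)).
  set (A2 := rs R2 (fun n => Cmod (a2 n) ^ 2)).
  set (A3 := rs R3 (fun n => Cmod (a3 n) ^ 2)).
  set (Cblk := / D * (2 * (2 * PI * (2 * D * D + 16 / (Lam * Lam))))).
  set (F := output eta m kK k1 k2 k3 cj a1 a2 a3).
  set (Jb := list_prod R2 J).
  set (gF := fun q : Z * (Z * Z) => Cmult (Cconj (a2 (fst q))) (bet eta m kK cj a1 a3 (fst q) (snd q))).
  set (xF := fun q : Z * (Z * Z) => xiF cj (snd q)).
  set (pF := fun q : Z * (Z * Z) => phF cj (fst q) (snd q)).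
  set (Hfn := fun n2 => Hf eta m kK k3 cj a1 a3 n2).
  assert (HPI := PI_RGT_0).
  assert (S1 : forall t, is_RInt (fun x => Cmod (F t x) ^ 2) 0 (2 * PI) (Gr Jb gF xF pF t)).
  { intros t. eapply is_RInt_ext; [| apply gram]. intros x _.
    unfold F. rewrite output_decomp; auto. unfold Jb. rewrite cs_prod. do 2 f_equal. apply cs_ext; intros n2 _.
    unfold Hf. rewrite <- cs_mult_l. apply cs_ext; intros j _. unfold gF, xF, pF; simpl. ring. }
  assert (S2 : RInt (fun t => RInt (fun x => Cmod (F t x) ^ 2) 0 (2 * PI)) 0 delta = RInt (Gr Jb gF xF pF) 0 delta).
  { apply RInt_ext. intros t _. apply is_RInt_unique, S1. }
  fold F. rewrite S2.
  set (G' := fun n2 t => if Rle_dec (dy k2 / 2) (Rabs (IZR n2)) then Gr J (bet eta m kK cj a1 a3 n2) (xiF cj) (phF cj n2) t else 0).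
  assert (S3 : forall t, Gr Jb gF xF pF t <= A2 * rs R2 (fun n2 => G' n2 t)).
  { intros t. apply (is_RInt_le (fun x => Cmod (F t x) ^ 2)
       (fun x => A2 * rs R2 (fun n2 => Cmod (if Rle_dec (dy k2 / 2) (Rabs (IZR n2)) then Hfn n2 t x else RtoC 0) ^ 2)) 0 (2 * PI)).
    lra. apply S1.
    - apply (is_RInt_scal (V := R_NormedModule)). apply is_RInt_rs; intros n2 _. unfold G'.
      destruct (Rle_dec (dy k2 / 2) (Rabs (IZR n2))). apply gram.
      eapply is_RInt_ext; [| apply (is_RInt_zero (V := R_NormedModule))]. intros. rewrite Cmod_0. change (@zero R_NormedModule) with 0. simpl. ring.
    - intros x _. unfold F. rewrite output_decomp; auto. fold R2.
      rewrite (cs_ext R2 _ (fun n2 => Cmult (Cconj (a2 n2)) (if Rle_dec (dy k2 / 2) (Rabs (IZR n2)) then Hfn n2 t x else RtoC 0))).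
      + eapply Rle_trans. apply cs_CS. unfold A2. right. f_equal. apply rs_ext; intros; rewrite Cmod_conj; auto.
      + intros n2 _. destruct (Rle_dec (dy k2 / 2) (Rabs (IZR n2))); auto.
        assert (a2 n2 = RtoC 0). { apply Hs2. unfold in_I. destruct (Nat.eqb k2 0) eqn:E. apply Nat.eqb_eq in E. lia. lra. }
        rewrite H. apply injective_projections; simpl; ring. }
  assert (S4 : RInt (Gr Jb gF xF pF) 0 delta <= A2 * rs R2 (fun n2 => RInt (G' n2) 0 delta)).
  { apply (is_RInt_le (Gr Jb gF xF pF) (fun t => A2 * rs R2 (fun n2 => G' n2 t)) 0 delta). lra.
    apply (RInt_correct (V := R_CompleteNormedModule)). apply Gr_exRInt.
    apply (is_RInt_scal (V := R_NormedModule)). apply is_RInt_rs; intros n2 _.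
    apply (RInt_correct (V := R_CompleteNormedModule)). unfold G'. destruct (Rle_dec (dy k2 / 2) (Rabs (IZR n2))).
    apply Gr_exRInt. apply (ex_RInt_const (V := R_NormedModule)).
    intros; apply S3. }
  assert (HCb : 0 <= Cblk).
  { unfold Cblk. apply Rmult_le_pos. left; apply Rinv_0_lt_compat; lra.
    assert (0 <= 16 / (Lam * Lam)). { unfold Rdiv. apply Rmult_le_pos. lra. left; apply Rinv_0_lt_compat; nra. }
    assert (0 <= D * D) by nra. nra. }
  assert (S5 : forall n2, In n2 R2 -> RInt (G' n2) 0 delta <= Cblk * rs J (fun j => Cmod (bet eta m kK cj a1 a3 n2 j) ^ 2)).
  { intros n2 Hn2. unfold G'. destruct (Rle_dec (dy k2 / 2) (Rabs (IZR n2))) as [Hc|Hc].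
    - unfold J, RK, R3, Cblk. apply (block_bound (bnd kK) (zr (bnd k3)) (sgnz cj)).
      apply NoDup_zr. unfold sgnz; destruct cj; auto. auto. auto.
      intros [n n3] [n' n3'] Hj Hk Hxi Hne. simpl in *.
      apply in_prod_iff in Hj. apply in_prod_iff in Hk. destruct Hj as [Hn Hn3]. destruct Hk as [Hn' Hn3'].
      unfold phF. simpl. rewrite <- minus_IZR.
      replace ((n2 + n) * (n2 + n) - n2 * n2 + sgnz cj * (n3 * n3) - ((n2 + n') * (n2 + n') - n2 * n2 + sgnz cj * (n3' * n3')))%Z
        with ((n - n') * (2 * n2 + n + n' - (n3 + n3')))%Z.
      + rewrite mult_IZR, Rabs_mult. pose proof (Hsep n2 n n' n3 n3' Hc Hn Hn' Hn3 Hn3').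
        pose proof (Rabs_pos (IZR (n - n'))). rewrite Rmult_comm. apply Rmult_le_compat_l; auto.
      + unfold sgnz in *. destruct cj.
        * replace n3' with (n3 + n' - n)%Z by lia. ring.
        * replace n3' with (n3 + n - n')%Z by lia. ring.
    - replace (RInt (fun _ => 0) 0 delta) with 0.
      2: { symmetry. apply (is_RInt_unique (V := R_CompleteNormedModule)). apply (is_RInt_zero (V := R_NormedModule)). }
      apply Rmult_le_pos; auto. apply rs_nonneg; intros; apply pow2_ge_0. }
  assert (Hcc : forall n, Cmod (cc eta m kK n) <= B).
  { intros n. unfold cc. rewrite Cmod_mult, Cmod_R. pose proof (eta_bounds eta Heta (IZR n / dy kK)).
    rewrite Rabs_right by lra. pose proof (Hm n). pose proof (Cmod_ge_0 (m n)). nra. }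
  assert (S6 : forall n2, rs J (fun j => Cmod (bet eta m kK cj a1 a3 n2 j) ^ 2) <=
                 B ^ 2 * (rs RK (fun n => Cmod (a1 (n2 + n)%Z) ^ 2) * A3)).
  { intros n2. unfold J. rewrite rs_prod. rewrite <- rs_scal_r, <- rs_scal. apply rs_le; intros n _.
    unfold A3. rewrite <- rs_scal, <- rs_scal. apply rs_le; intros n3 _.
    unfold bet. cbn [fst snd]. rewrite !Cmod_mult.
    assert (Cmod (b3 cj a3 n3) = Cmod (a3 n3)) by (unfold b3; destruct cj; auto; apply Cmod_conj).
    rewrite H. pose proof (Hcc n). pose proof (Cmod_ge_0 (cc eta m kK n)).
    pose proof (Cmod_ge_0 (a1 (n2 + n)%Z)). pose proof (Cmod_ge_0 (a3 n3)).
    assert (Cmod (cc eta m kK n) ^ 2 <= B ^ 2) by nra.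
    assert (0 <= Cmod (a1 (n2 + n)%Z) ^ 2 * Cmod (a3 n3) ^ 2) by (apply Rmult_le_pos; apply pow2_ge_0).
    replace ((Cmod (cc eta m kK n) * Cmod (a1 (n2 + n)%Z) * Cmod (a3 n3)) ^ 2) with
      (Cmod (cc eta m kK n) ^ 2 * (Cmod (a1 (n2 + n)%Z) ^ 2 * Cmod (a3 n3) ^ 2)) by ring.
    replace (B ^ 2 * (Cmod (a1 (n2 + n)%Z) ^ 2 * Cmod (a3 n3) ^ 2)) with (B ^ 2 * (Cmod (a1 (n2 + n)%Z) ^ 2 * Cmod (a3 n3) ^ 2)) by ring.
    apply Rmult_le_compat_r; auto. }
  assert (S7 : rs R2 (fun n2 => rs RK (fun n => Cmod (a1 (n2 + n)%Z) ^ 2)) <= INR (2 * bnd kK + 1) * A1).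
  { rewrite rs_swap. eapply Rle_trans. apply (rs_le _ _ (fun _ => A1)).
    intros n _. unfold R2, A1, R1. apply (shift_sum _ _ (fun y => Cmod (a1 y) ^ 2)). intros; apply pow2_ge_0.
    intros y Hy. rewrite (supp_out k1 a1 y Hs1 Hy). rewrite Cmod_0. ring.
    rewrite rs_const. unfold RK. rewrite zr_length. right; ring. }
  eapply Rle_trans. apply S4. apply Rmult_le_compat_l. apply rs_nonneg; intros; apply pow2_ge_0.
  eapply Rle_trans. apply (rs_le _ _ (fun n2 => Cblk * (B ^ 2 * (rs RK (fun n => Cmod (a1 (n2 + n)%Z) ^ 2) * A3)))).
  { intros n2 Hn2. eapply Rle_trans. apply S5; auto. apply Rmult_le_compat_l; auto. }
  rewrite rs_scal, rs_scal, rs_scal_r. apply Rmult_le_compat_l; auto. apply Rmult_le_compat_l. apply pow2_ge_0.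
  assert (0 <= A3) by (apply rs_nonneg; intros; apply pow2_ge_0).
  rewrite Rmult_comm. apply Rmult_le_compat_l; auto.
Qed.


Lemma gen eta (Heta : eta_ok eta) (A : R) (HA : 1 <= A) (B : R) (HB : 0 <= B) :
  estimate_holds eta A (16 * A) (1 + 10 * A * (B + 1)) (fun m => forall n, Cmod (m n) <= B).
Proof.
  unfold estimate_holds. intros k1 k2 k3 kK a1 a2 a3 delta cj m Hm H12 H21 H3 HK Hs1 Hs2 Hs3 Hd0 Hd.
  pose proof (dy_pos k1) as P1. pose proof (dy_pos k2) as P2. pose proof (dy_pos k3) as P3. pose proof (dy_pos kK) as PK.
  assert (Hk2 : (1 <= k2)%nat).
  { destruct k2. assert (E0 : dy 0 = 1) by (unfold dy; simpl; ring). rewrite E0 in H12. assert (16 * A * 1 <= 16 * A * dy k3) by (apply Rmult_le_compat_l; lra). exfalso. lra. lia. }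
  set (N1 := dy k1) in *. set (N2 := dy k2) in *. set (N3 := dy k3) in *. set (K := dy kK) in *.
  set (D := A / N1). set (Lam := N1 / (2 * A)).
  assert (HD : 0 < D) by (unfold D; apply Rdiv_lt_0_compat; lra).
  assert (HLam : 0 < Lam) by (unfold Lam; apply Rdiv_lt_0_compat; lra).
  assert (Hsep : forall n2 n n' n3 n3', dy k2 / 2 <= Rabs (IZR n2) ->
     In n (zr (bnd kK)) -> In n' (zr (bnd kK)) -> In n3 (zr (bnd k3)) -> In n3' (zr (bnd k3)) ->
     Lam <= Rabs (IZR (2 * n2 + n + n' - (n3 + n3')))).
  { intros n2 n n' n3 n3' Hc Hn Hn' Hn3 Hn3'.
    apply zr_abs in Hn. apply zr_abs in Hn'. apply zr_abs in Hn3. apply zr_abs in Hn3'. fold K N3 in Hn, Hn', Hn3, Hn3'. fold N2 in Hc.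
    rewrite minus_IZR, !plus_IZR, mult_IZR.
    set (y := 2 * IZR n2 + IZR n + IZR n' - (IZR n3 + IZR n3')).
    assert (Hy : N2 - 4 * K - 4 * N3 <= Rabs y).
    { unfold y. pose proof (Rabs_triang_inv (2 * IZR n2) (IZR n3 + IZR n3' - IZR n - IZR n')).
      replace (2 * IZR n2 - (IZR n3 + IZR n3' - IZR n - IZR n')) with (2 * IZR n2 + IZR n + IZR n' - (IZR n3 + IZR n3')) in H by ring.
      rewrite Rabs_mult, (Rabs_right 2) in H by lra.
      assert (Rabs (IZR n3 + IZR n3' - IZR n - IZR n') <= Rabs (IZR n3) + Rabs (IZR n3') + Rabs (IZR n) + Rabs (IZR n')).
      { unfold Rminus. eapply Rle_trans. apply Rabs_triang. rewrite Rabs_Ropp.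
        eapply Rle_trans. apply Rplus_le_compat_r. apply Rabs_triang. rewrite Rabs_Ropp.
        pose proof (Rabs_triang (IZR n3) (IZR n3')). lra. }
      lra. }
    assert (N1 <= 2 * A * Rabs y).
    { assert (A * N2 - 4 * A * K - 4 * A * N3 <= A * Rabs y) by nra. nra. }
    unfold Lam. apply (Rmult_le_reg_l (2 * A)). lra. unfold Rdiv.
    replace (2 * A * (N1 * / (2 * A))) with N1 by (field; lra). lra. }
  assert (HKB := key_bound eta m kK k1 k2 k3 cj a1 a2 a3 B D Lam delta Heta HB Hm Hs1 Hs2 Hk2 HLam (conj Hd0 Hd) Hsep).
  rewrite !parseval. unfold l2tx.
  set (A1 := rs (zr (bnd k1)) (fun n => Cmod (a1 n) ^ 2)) in *.
  set (A2 := rs (zr (bnd k2)) (fun n => Cmod (a2 n) ^ 2)) in *.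
  set (A3 := rs (zr (bnd k3)) (fun n => Cmod (a3 n) ^ 2)) in *.
  set (X := RInt (fun t => RInt (fun x => Cmod (output eta m kK k1 k2 k3 cj a1 a2 a3 t x) ^ 2) 0 (2 * PI)) 0 delta) in *.
  assert (HA1 : 0 <= A1) by (apply rs_nonneg; intros; apply pow2_ge_0).
  assert (HA2 : 0 <= A2) by (apply rs_nonneg; intros; apply pow2_ge_0).
  assert (HA3 : 0 <= A3) by (apply rs_nonneg; intros; apply pow2_ge_0).
  assert (HPI := PI_RGT_0). assert (HPI2 := PI2_1).
  set (Cst := 1 + 10 * A * (B + 1)).
  assert (HC : 0 < Cst) by (unfold Cst; nra).
  assert (EINR : INR (2 * bnd kK + 1) = 4 * K + 1).
  { rewrite plus_INR, mult_INR, (INR_IZR_INZ (bnd kK)), IZR_bnd. simpl. fold K. ring. }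
  rewrite EINR in HKB.
  assert (ECb : / D * (2 * (2 * PI * (2 * D * D + 16 / (Lam * Lam)))) = 264 * PI * A / N1).
  { unfold D, Lam. field. lra. }
  rewrite ECb in HKB.
  set (Y := Cst * Cst * (K / N1) * (2 * PI * A1) * (2 * PI * A2) * (2 * PI * A3)).
  assert (HXY : X <= Y).
  { eapply Rle_trans. apply HKB.
    set (P := A1 * A2 * A3).
    assert (HP : 0 <= P) by (unfold P; apply Rmult_le_pos; [apply Rmult_le_pos|]; auto).
    replace (A2 * (264 * PI * A / N1 * (B ^ 2 * (A3 * ((4 * K + 1) * A1))))) with
      ((264 * PI * A * B ^ 2 * (4 * K + 1) / N1) * P) by (unfold P; field; lra).
    replace Y with ((Cst * Cst * 8 * PI * PI * PI * K / N1) * P) by (unfold Y, P; field; lra).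
    apply Rmult_le_compat_r; auto. unfold Rdiv. apply Rmult_le_compat_r. left; apply Rinv_0_lt_compat; lra.
    assert (Cst * Cst >= 100 * A * B ^ 2).
    { unfold Cst. assert (10 * A * (B + 1) >= 10 * A * B) by nra. assert (0 <= 10 * A * B) by nra. nra. }
    assert (PI * PI >= 4) by nra.
    assert (0 <= A * B ^ 2 * K) by (apply Rmult_le_pos; [apply Rmult_le_pos|]; nra).
    assert (264 * PI * A * B ^ 2 * (4 * K + 1) <= 1320 * PI * (A * B ^ 2 * K)).
    { assert (0 <= PI * A * B ^ 2) by (apply Rmult_le_pos; [apply Rmult_le_pos|]; nra). nra. }
    assert (1320 * PI * (A * B ^ 2 * K) <= 800 * (PI * PI) * PI * (A * B ^ 2 * K)).
    { assert (0 <= PI * (A * B ^ 2 * K)) by (apply Rmult_le_pos; lra).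
      replace (800 * (PI * PI) * PI * (A * B ^ 2 * K)) with ((800 * (PI * PI)) * (PI * (A * B ^ 2 * K))) by ring.
      replace (1320 * PI * (A * B ^ 2 * K)) with (1320 * (PI * (A * B ^ 2 * K))) by ring.
      apply Rmult_le_compat_r; lra. }
    assert (800 * (PI * PI) * PI * (A * B ^ 2 * K) <= Cst * Cst * 8 * PI * PI * PI * K).
    { assert (0 <= PI * PI * PI * K) by (apply Rmult_le_pos; [|lra]; apply Rmult_le_pos; nra). nra. }
    lra. }
  assert (EY : sqrt Y = Cst * sqrt (K / N1) * sqrt (2 * PI * A1) * sqrt (2 * PI * A2) * sqrt (2 * PI * A3)).
  { unfold Y. assert (0 <= K / N1) by (unfold Rdiv; apply Rmult_le_pos; [lra| left; apply Rinv_0_lt_compat; lra]).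
    rewrite !sqrt_mult_alt; try (repeat apply Rmult_le_pos); try nra.
    rewrite sqrt_sqrt by lra. ring. all: try lra. all: try (unfold PI in HPI; lra). }
  rewrite <- EY. apply sqrt_le_1_alt. auto.
Qed.

Lemma hsym_bound n : Cmod (hsym n) <= 1.
Proof.
  unfold hsym, Cmod. cbn [fst snd]. rewrite <- sqrt_1. apply sqrt_le_1_alt.
  destruct n; simpl; lra.
Qed.

Theorem lemma2p10 :
  forall eta : R -> R, eta_ok eta ->
  forall A : R, 1 <= A ->
    (exists C0 Cst : R, 0 < C0 /\ 0 < Cst /\
       estimate_holds eta A C0 Cst (fun m => m = hsym)) /\
    (forall B : R, 0 <= B ->
       exists C0 Cst : R, 0 < C0 /\ 0 < Cst /\
         estimate_holds eta A C0 Cst (fun m => forall n : Z, Cmod (m n) <= B)).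
Proof.
  intros eta Heta A HA. split.
  - exists (16 * A), (1 + 10 * A * (1 + 1)). split. lra. split. nra.
    intros k1 k2 k3 kK a1 a2 a3 delta cj m Hm. apply (gen eta Heta A HA 1 ltac:(lra)).
    intros n. subst m. apply hsym_bound.
  - intros B HB. exists (16 * A), (1 + 10 * A * (B + 1)). split. lra. split. nra. apply gen; auto.
Qed.
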